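(* For every $\varepsilon>0$ there exists $C_\varepsilon\in\mathbb R$, depending only on $\varepsilon$ and $p$, such that $$|u|\le\varepsilon\,\Gamma(u)+C_\varepsilon\qquad\text{for all }u\in\bar I_p.$$
   Context: $p\in L^1_{loc}(\mathbb R_+)$ is absolutely continuous and increasing on $(0,\infty)$ (with $p'>0$), and $\lim_{u\to+\infty}p(u)=+\infty$. If $p(0):=\lim_{u\downarrow0}p(u)$ is finite, $p$ is extended to $\mathbb R$ by $p(u)=2p(0)-p(-u)$ for $u\le0$. $I_p=(0,\infty)$ if $p(0)=-\infty$ and $I_p=\mathbb R$ otherwise; $\bar I_p$ is its closure in $\mathbb R$. $\Gamma(u)=\int_1^u(p(a)-p(1))\,da$ for $u\in\bar I_p$. *)

(* Defs.v *)
From HB Require Import structures.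
From mathcomp Require Import all_boot all_order all_algebra.
From mathcomp Require Import all_classical all_reals all_analysis.
Set Implicit Arguments. Unset Strict Implicit. Unset Printing Implicit Defensive.
Import Order.TTheory GRing.Theory Num.Theory.
Import numFieldNormedType.Exports.
Local Open Scope classical_set_scope.
Local Open Scope ring_scope.

Section defs.
Variable R : realType.

Definition abs_cont_on (f : R -> R) (a b : R) : Prop :=
  forall e : R, 0 < e -> exists2 d : R, 0 < d &
    forall (n : nat) (x y : nat -> R),
      (forall i, (i < n)%N -> a <= x i /\ x i <= y i /\ y i <= b) ->
      (forall i, (i.+1 < n)%N -> y i <= x i.+1) ->
      \sum_(i < n) (y i - x i) < d ->
      \sum_(i < n) `|f (y i) - f (x i)| < e.

Definition admissible_p (p : R -> R) : Prop :=
  (* p in L^1_loc(R_+), R_+ = [0, +oo) *)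
  (forall b : R, 0 < b -> lebesgue_measure.-integrable `[0, b] (EFin \o p)) /\
  (* p absolutely continuous on (0, +oo) (i.e. on every compact subinterval) *)
  (forall a b : R, 0 < a -> a <= b -> abs_cont_on p a b) /\
  (forall x y : R, 0 < x -> x <= y -> p x <= p y) /\
  {ae lebesgue_measure, forall x : R, 0 < x -> derivable p x 1 /\ 0 < derive1 p x} /\
  (p x @[x --> +oo] --> +oo) /\
  (* if p(0) := lim_{u -> 0+} p u is finite, p(0) is that value and p is
     extended to R by p u = 2 p(0) - p(-u) for u <= 0 *)
  (forall l : R, p x @[x --> 0^'+] --> l ->
     forall u : R, u <= 0 -> p u = 2 * l - p (- u)).

(* closure of I_p *)
Definition Ibar (p : R -> R) : set R :=
  [set u | (p x @[x --> 0^'+] --> -oo) -> 0 <= u].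

(* Gamma(u) = int_1^u (p a - p 1) da  (oriented Lebesgue integral) *)
Definition Gamma (p : R -> R) (u : R) : R :=
  if (1 <= u) then \int[lebesgue_measure]_(a in `[1, u]) (p a - p 1)
  else - \int[lebesgue_measure]_(a in `[u, 1]) (p a - p 1).

End defs.

(* Main.v *)
Set Warnings "-all".
Require Import Defs.
From HB Require Import structures.
From mathcomp Require Import all_boot all_order all_algebra.
From mathcomp Require Import all_classical all_reals all_analysis.
From mathcomp Require Import lra.
Import Order.TTheory GRing.Theory Num.Theory.
Local Open Scope classical_set_scope.
Local Open Scope ring_scope.

Section helpers.
Variable R : realType.
Local Notation mu := (@lebesgue_measure R).

Lemma bnd_int (f : R -> R) (D : set R) (M : R) : measurable D ->
  (mu D < +oo)%E -> measurable_fun D f ->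
  (forall x, D x -> `|f x| <= M) -> mu.-integrable D (EFin \o f).
Proof.
move=> mD fin mf fM; apply: measurable_bounded_integrable => //.
rewrite /bounded_near; exists M; split; first exact: num_real.
by move=> N MN x Dx /=; apply: le_trans (fM _ Dx) (ltW MN).
Qed.

Lemma mono_int (f : R -> R) (a b : R) : a <= b ->
  (forall x y, a <= x -> x <= y -> y <= b -> f x <= f y) ->
  mu.-integrable `[a, b] (EFin \o f).
Proof.
move=> ab fnd.
pose c x := Num.min (Num.max x a) b.
have ca x : a <= c x by rewrite /c le_min ab le_max lexx orbT.
have cb x : c x <= b by rewrite /c ge_min lexx orbT.
have cm x y : x <= y -> c x <= c y.
  by move=> xy; rewrite /c; apply: le_min2 => //; apply: le_max2.
have cid x : a <= x <= b -> c x = x.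
  by case/andP=> ax xb; rewrite /c (max_idPl ax) (min_idPl xb).
pose g x := f (c x).
have gnd : {homo g : x y / x <= y}.
  by move=> x y xy; apply: fnd; [exact: ca|exact: cm|exact: cb].
have HH := @eq_integrable _ _ _ mu `[a, b] (measurable_itv _) (EFin \o g) (EFin \o f).
apply: HH.
  by move=> x; rewrite inE /= in_itv /= => /cid; rewrite /g /= => ->.
apply: (@bnd_int g _ (`|f a| + `|f b|)) => //.
- by rewrite lebesgue_measure_itv /=; case: ifP => _ //; rewrite -EFinD ltry.
- exact: measurable_realfun.nondecreasing_measurable.
- move=> x _; rewrite /g.
  have h1 := fnd a (c x) (lexx a) (ca x) (cb x).
  have h2 := fnd (c x) b (ca x) (cb x) (lexx b).
  rewrite ler_norml; apply/andP; split.
  + apply: le_trans h1; rewrite lerNl; apply: le_trans (ler_norm _) _.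
    by rewrite normrN lerDl.
  + apply: le_trans h2 _; apply: le_trans (ler_norm _) _; by rewrite lerDr.
Qed.

Lemma int_lb (h : R -> R) (a b c d K : R) : a <= c -> c <= d -> d <= b ->
  0 <= K -> mu.-integrable `[a, b] (EFin \o h) ->
  (forall x, a <= x -> x <= b -> 0 <= h x) ->
  (forall x, c <= x -> x <= d -> K <= h x) ->
  K * (d - c) <= \int[mu]_(x in `[a, b]) h x.
Proof.
move=> ac cd db K0 hI h0 hK.
have fI : (\int[mu]_(x in `[a, b]) (h x)%:E)%E \is a fin_num by apply: integrable_fin_num hI.
have mh := measurable_int mu hI.
have sub : `[c, d] `<=` `[a, b].
  move=> x /=; rewrite !in_itv /= => /andP[cx xd].
  by apply/andP; split; lra.
rewrite /Rintegral -lee_fin fineK //.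
apply: (@le_trans _ _ (\int[mu]_(x in `[c, d]) (h x)%:E)%E); last first.
  apply: ge0_subset_integral => //.
  move=> x /=; rewrite in_itv /= => /andP[ax xb]; rewrite lee_fin; exact: h0.
apply: (@le_trans _ _ (\int[mu]_(x in `[c, d]) (cst K%:E) x)%E).
  rewrite integral_cst //.
  have L := lebesgue_measure_itv `[c, d]; rewrite /= in L.
  rewrite [X in (_ * X)%E]L.
  rewrite lte_fin; case: ltP => cd'.
    by rewrite -EFinD -EFinM.
  have -> : d = c by apply: le_anti; rewrite cd' cd.
  by rewrite subrr mulr0 mule0.
apply: ge0_le_integral.
- by [].
- by move=> x _; rewrite lee_fin.
- exact: measurable_cst.
- exact: measurable_funS mh.
- move=> x /=; rewrite in_itv /= => /andP[cx xd]; rewrite lee_fin; exact: hK.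
Qed.

Lemma RintegralN' (f : R -> R) (D : set R) : measurable D ->
  mu.-integrable D (EFin \o f) ->
  \int[mu]_(x in D) (- f x) = - \int[mu]_(x in D) f x.
Proof.
move=> mD fI; rewrite -mulN1r -RintegralZl //.
by apply: eq_Rintegral => x _; rewrite mulN1r.
Qed.

End helpers.

Theorem lemma3p2 (R : realType) (p : R -> R) (hp : admissible_p p) :
  forall eps : R, 0 < eps -> exists C : R,
    forall u : R, u \in Ibar p -> `|u| <= eps * Gamma p u + C.
Proof.
move=> eps eps0.
case: hp => hint [_ [hmono [_ [hinf hext]]]].
have einv : 0 < eps^-1 by rewrite invr_gt0.
have eK : forall x : R, eps * (eps^-1 * x) = x.
  by move=> x; rewrite mulrA mulfV ?mul1r // gt_eqF.
have bigM : forall A, exists M, 1 <= M /\ forall x, M <= x -> A <= p x.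
  move=> A; move/cvgryPge : hinf => /(_ A) [M [Mr HM]].
  exists (Num.max (M + 1) 1); split; first by rewrite le_max lexx orbT.
  move=> x Hx; apply: HM; apply: lt_le_trans Hx.
  by rewrite lt_max ltrDl ltr01.
have [M1 [M1ge1 HM1]] := bigM (p 1 + eps^-1).
have [M2 [M20 HM2]] : exists M2, 0 <= M2 /\ forall u, Ibar p u -> u < 0 ->
    `|u| <= eps * Gamma p u + M2.
  have [Hninf|Hninf] := pselect (p x @[x --> 0^'+] --> -oo).
    exists 0; split => // u Iu u0.
    by move: (Iu Hninf); rewrite leNgt u0.
  have [lb Hlb] : exists m, forall x, 0 < x < 1 -> m <= p x.
    apply: contrapT => H; apply: Hninf; apply/cvgrNyPlt => A.
    have [x0 /andP[x00 x01] px0] : exists2 x, 0 < x < 1 & p x < A.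
      apply: contrapT => H2; apply: H; exists A => x Hx.
      rewrite leNgt; apply/negP => pxA; apply: H2; by exists x.
    near=> y; apply: le_lt_trans px0; apply: hmono.
      by near: y; exact: nbhs_right_gt.
    by apply: ltW; near: y; exact: nbhs_right_lt.
  set S := [set p x | x in [set` Interval (BRight (0:R)) (BLeft 1)]].
  have Sb : has_lbound S.
    by exists lb => _ [x Hx <-]; apply: Hlb; move: Hx; rewrite /= in_itv.
  set l := inf S.
  have pl : p x @[x --> 0^'+] --> l.
    apply: nondecreasing_at_right_cvgr => //; first by rewrite bnd_simp.
    move=> x y; rewrite !in_itv /= => /andP[x0 _] _ xy; exact: hmono.
  have pext := hext l pl.
  have p0 : p 0 = l.
    by have := pext 0 (lexx 0); rewrite oppr0 => h; lra.
  have lp : forall z, 0 <= z -> l <= p z.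
    move=> z; rewrite le_eqVlt => /orP[/eqP <-|z0]; first by rewrite p0.
    pose w := Num.min z (2^-1).
    have w0 : 0 < w by rewrite lt_min z0 invr_gt0 ltr0n.
    have w1 : w < 1 by rewrite gt_min; apply/orP; right; lra.
    apply: (@le_trans _ _ (p w)).
      by apply: ge_inf => //; exists w => //; rewrite /= in_itv /= w0 w1.
    by apply: hmono => //; rewrite ge_min lexx.
  have mono0 : forall z w, 0 <= z -> z <= w -> p z <= p w.
    move=> z w; rewrite le_eqVlt => /orP[/eqP <-|z0] zw.
      by rewrite p0; apply: lp.
    exact: hmono.
  have mono : forall x y, x <= y -> p x <= p y.
    move=> x y xy; case: (ltP 0 x) => x0; first exact: hmono.
    have px : p x <= l.
      by rewrite pext //; have := lp (- x) ltac:(lra); lra.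
    case: (ltP 0 y) => y0; first by apply: le_trans px (lp _ (ltW y0)).
    rewrite (pext x) // (pext y) //.
    have := mono0 (- y) (- x) ltac:(lra) ltac:(lra); lra.
  have [M [M1' HM]] := bigM (2 * l - p 1 + eps^-1).
  exists M; split; first lra.
  move=> u _ u0.
  have u1 : (1 <= u) = false by apply/negbTE; rewrite -ltNge; lra.
  rewrite /Gamma u1.
  have hI : lebesgue_measure.-integrable `[u, 1] (EFin \o (fun a => p a - p 1)).
    apply: mono_int; first lra.
    by move=> x y _ xy _; rewrite /= lerD2r; exact: mono.
  have hI' : lebesgue_measure.-integrable `[u, 1]
      (EFin \o (fun a => - (p a - p 1))) by exact: integrableN hI.
  rewrite -RintegralN' // ltr0_norm //.
  case: (leP (- M) u) => uM.
    have G0 : 0 <= \int[lebesgue_measure]_(x in `[u, 1]) (- (p x - p 1)).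
      apply: Rintegral_ge0 => x /=; rewrite in_itv /= => /andP[_ x1].
      by have := mono _ _ x1; lra.
    by have := mulr_ge0 (ltW eps0) G0; set G := \int[lebesgue_measure]_(x in `[u, 1]) (- (p x - p 1)); clearbody G; lra.
  have := @int_lb R (fun a => - (p a - p 1)) u 1 u (- M) eps^-1
    (lexx _) ltac:(lra) ltac:(lra) (ltW einv) hI'.
  move=> /(_ _ _) H.
  have H' : eps^-1 * (- M - u) <= \int[lebesgue_measure]_(x in `[u, 1]) (- (p x - p 1)).
    apply: H.
      move=> x _ x1; by have := mono _ _ x1; lra.
    move=> x _ xM; rewrite (pext x); last lra.
    by have := HM (- x) ltac:(lra); lra.
  have := ler_wpM2l (ltW eps0) H'; rewrite eK; set G := \int[lebesgue_measure]_(x in `[u, 1]) (- (p x - p 1)); clearbody G; lra.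
exists (M1 + M2 + 1) => u; rewrite in_setE => Iu.
case: (ltP u 0) => u0.
  by have := HM2 u Iu u0; lra.
rewrite ger0_norm //.
case: (leP 1 u) => u1.
  rewrite /Gamma u1.
  have hI : lebesgue_measure.-integrable `[1, u] (EFin \o (fun a => p a - p 1)).
    apply: mono_int => // x y x1 xy _; rewrite /= lerD2r; apply: hmono => //; lra.
  case: (leP u M1) => uM.
    have G0 : 0 <= \int[lebesgue_measure]_(x in `[1, u]) (p x - p 1).
      apply: Rintegral_ge0 => x /=; rewrite in_itv /= => /andP[x1 _].
      by have := hmono 1 x ltr01 x1; lra.
    by have := mulr_ge0 (ltW eps0) G0; set G := \int[lebesgue_measure]_(x in `[1, u]) (p x - p 1); clearbody G; lra.
  have H' := @int_lb R (fun a => p a - p 1) 1 u M1 u eps^-1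
    M1ge1 (ltW uM) (lexx _) (ltW einv) hI.
  have H'' : eps^-1 * (u - M1) <= \int[lebesgue_measure]_(x in `[1, u]) (p x - p 1).
    apply: H'.
      by move=> x x1 _; have := hmono 1 x ltr01 x1; lra.
    by move=> x xM _; have := HM1 x xM; lra.
  have := ler_wpM2l (ltW eps0) H''; rewrite eK; set G := \int[lebesgue_measure]_(x in `[1, u]) (p x - p 1); clearbody G; lra.
have u1' : (1 <= u) = false by apply/negbTE; rewrite -ltNge.
rewrite /Gamma u1'.
have hI0 : lebesgue_measure.-integrable `[u, 1] (EFin \o p).
  apply: integrableS (hint 1 ltr01) => //.
  move=> x /=; rewrite !in_itv /= => /andP[ux ->]; rewrite andbT; lra.
have hc : lebesgue_measure.-integrable `[u, 1] (EFin \o cst (p 1)).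
  apply: (@bnd_int _ _ _ `|p 1|) => //.
  - by rewrite lebesgue_measure_itv /=; case: ifP => _ //; rewrite -EFinD ltry.
have hI : lebesgue_measure.-integrable `[u, 1] (EFin \o (fun a => p a - p 1)).
  exact: integrableB hI0 hc.
have hI' : lebesgue_measure.-integrable `[u, 1]
    (EFin \o (fun a => - (p a - p 1))) by exact: integrableN hI.
rewrite -RintegralN' //.
have G0 : 0 <= \int[lebesgue_measure]_(x in `[u, 1]) (- (p x - p 1)).
  rewrite -Rintegral_itv_obnd_cbnd.
    apply: Rintegral_ge0 => x /=; rewrite in_itv /= => /andP[ux x1].
    by have := hmono x 1 ltac:(lra) x1; lra.
  apply: integrableS hI' => //.
  by move=> x /=; rewrite !in_itv /= => /andP[ux ->]; rewrite andbT ltW.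
by have := mulr_ge0 (ltW eps0) G0; set G := \int[lebesgue_measure]_(x in `[u, 1]) (- (p x - p 1)); clearbody G; lra.
Unshelve. all: by end_near.
Qed.
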